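(* In $\mathcal{V}$, for all $p,q\in P$: $p\preccurlyeq q$ if and only if $|S_p|\leqslant|S_q|$, and $p\preccurlyeq^\ast q$ if and only if $|S_p|\leqslant^\ast|S_q|$.
   Context: Work in $\mathsf{ZFA}$ (set theory with atoms) over a ground model of $\mathsf{ZFC}$ containing a doubly ordered set $\langle P,\preccurlyeq,\preccurlyeq^\ast\rangle$ (i.e. $\preccurlyeq$ a partial order on $P$, $\preccurlyeq^\ast$ a preorder on $P$, and $p\preccurlyeq q\Rightarrow p\preccurlyeq^\ast q$). Write $p\prec q$ for ($p\preccurlyeq q$ and $p\neq q$). For a quadruple $\langle x_0,x_1,x_2,x_3\rangle$ and $i<4$, $\mathrm{pr}_i(\langle x_0,x_1,x_2,x_3\rangle)=x_i$. For a set $S$, $\mathscr{S}(S)$ is the set of permutations of $S$. Define recursively $A_0=\{\langle0,p,\varnothing,k\rangle\mid p\in P,k\in\omega\}$ and $A_{n+1}=A_n\cup\{\langle n+1,q,a,0\rangle\mid q\in P,a\in A_n,\mathrm{pr}_1(a)\prec q\}\cup\{\langle n+1,q,a,k\rangle\mid q\in P,a\in A_n,\mathrm{pr}_1(a)\not\preccurlyeq q,\mathrm{pr}_1(a)\preccurlyeq^\ast q,k\in\omega\}$; let $A=\bigcup_{n}A_n$, whose elements serve as the atoms. Define groups $\mathcal{G}_n\subseteq\mathscr{S}(A_n)$: $\mathcal{G}_0=\{f\in\mathscr{S}(A_0)\mid \mathrm{pr}_1(f(a))=\mathrm{pr}_1(a)\text{ for all }a\in A_0\}$; for $f\in\mathscr{S}(A_{n+1})$,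 $f\in\mathcal{G}_{n+1}$ iff $f{\upharpoonright}A_n\in\mathcal{G}_n$ and for all $b\in A_{n+1}\setminus A_n$, $\mathrm{pr}_1(f(b))=\mathrm{pr}_1(b)$ and $\mathrm{pr}_2(f(b))=f(\mathrm{pr}_2(b))$. Let $\mathcal{G}=\{\pi\in\mathscr{S}(A)\mid \pi{\upharpoonright}A_n\in\mathcal{G}_n\text{ for all }n\}$. $\mathcal{V}$ is the permutation model determined by $\mathcal{G}$ and finite supports: $x\in\mathcal{V}$ iff $x\subseteq\mathcal{V}$ and there is a finite $B\subseteq A$ (a support of $x$) such that every $\pi\in\mathcal{G}$ fixing $B$ pointwise fixes $x$. For $p\in P$, $S_p=\{a\in A\mid \mathrm{pr}_1(a)=p\}$. For sets $X,Y$, $|X|\leqslant|Y|$ means there is an injection from $X$ into $Y$, and $|X|\leqslant^\ast|Y|$ means there is a surjection from a subset of $Y$ onto $X$ (both computed in $\mathcal{V}$). *)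

(* Defs.v *)
(* Permutation model V of the paper, restricted to what is
   needed to speak about |S_p| <= |S_q| and |S_p| <=* |S_q| in V. *)
From Stdlib Require Import List Arith.
Set Implicit Arguments.

Section Model.
Variable P : Type.
Variable le : P -> P -> Prop.
Variable lestar : P -> P -> Prop.

Definition lt (p q : P) : Prop := le p q /\ p <> q.

(* Raw quadruples.  A0 p k  = <0,p,∅,k> ;  AS n q a k = <n+1,q,a,k>. *)
Inductive raw : Type :=
| A0 : P -> nat -> raw
| AS : nat -> P -> raw -> nat -> raw.

Definition lvl (a : raw) : nat :=
  match a with A0 _ _ => 0 | AS n _ _ _ => S n end.
Definition pr1 (a : raw) : P :=
  match a with A0 p _ => p | AS _ q _ _ => q end.
(* pr_2 when it is an atom (None stands for ∅) *)
Definition parent (a : raw) : option raw :=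
  match a with A0 _ _ => None | AS _ _ b _ => Some b end.

(* a ∈ A  (and then a ∈ A_n iff lvl a <= n) *)
Fixpoint valid (a : raw) : Prop :=
  match a with
  | A0 _ _ => True
  | AS n q b k =>
      valid b /\ lvl b <= n /\
      ((lt (pr1 b) q /\ k = 0) \/ (~ le (pr1 b) q /\ lestar (pr1 b) q))
  end.

Definition Atom : Type := { a : raw | valid a }.

Definition alvl (a : Atom) : nat := lvl (proj1_sig a).
Definition apr1 (a : Atom) : P := pr1 (proj1_sig a).

(* π ∈ 𝒢 : π is a permutation of A with π↾A_n ∈ 𝒢_n for every n, written out:
   π↾A_n is a permutation of A_n, π preserves pr_1, and for atoms b of
   positive level pr_2(π b) = π(pr_2 b). *)
Definition inG (pi : Atom -> Atom) : Prop :=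
  (exists pinv : Atom -> Atom,
      (forall a, pinv (pi a) = a) /\ (forall a, pi (pinv a) = a)) /\
  (forall (n : nat) (a : Atom), alvl (pi a) <= n <-> alvl a <= n) /\
  (forall a : Atom, apr1 (pi a) = apr1 a) /\
  (forall b a : Atom, parent (proj1_sig b) = Some (proj1_sig a) ->
                      parent (proj1_sig (pi b)) = Some (proj1_sig (pi a))).

(* A set R of ordered pairs of atoms belongs to V iff it has a finite support
   (its elements, pairs of atoms, are always in V). π fixes R iff π[R] = R. *)
Definition in_V (R : Atom -> Atom -> Prop) : Prop :=
  exists B : list Atom,
    forall pi : Atom -> Atom, inG pi ->
      (forall b, In b B -> pi b = b) ->
      forall x y : Atom,
        R x y <-> (exists x' y', R x' y' /\ pi x' = x /\ pi y' = y).

(* |S_p| <= |S_q| in V: an injection S_p -> S_q lying in V *)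
Definition card_le_V (p q : P) : Prop :=
  exists R : Atom -> Atom -> Prop,
    in_V R /\
    (forall x y, R x y -> apr1 x = p /\ apr1 y = q) /\
    (forall x, apr1 x = p -> exists y, R x y) /\
    (forall x y y', R x y -> R x y' -> y = y') /\
    (forall x x' y, R x y -> R x' y -> x = x').

(* |S_p| <=* |S_q| in V: a surjection from a subset of S_q onto S_p lying in V *)
Definition card_le_star_V (p q : P) : Prop :=
  exists R : Atom -> Atom -> Prop,
    in_V R /\
    (forall y x, R y x -> apr1 y = q /\ apr1 x = p) /\
    (forall y x x', R y x -> R y x' -> x = x') /\
    (forall x, apr1 x = p -> exists y, R y x).

End Model.

(* Main.v *)
Require Import Defs.
From Stdlib Require Import RelationClasses List Arith Lia Classical ClassicalEpsilon ProofIrrelevance.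

Section Proof.
Variable P : Type.
Variables le lestar : P -> P -> Prop.
Notation raw := (raw P).
Notation Atom := (Atom le lestar).
Notation valid := (valid le lestar).

Fixpoint anc (c a : raw) : Prop :=
  a = c \/ match a with A0 _ _ => False | AS _ _ b _ => anc c b end.
Definition idx (a : raw) := match a with A0 _ k => k | AS _ _ _ k => k end.
Fixpoint maxidx (a : raw) := match a with A0 _ k => k | AS _ _ b k => Nat.max k (maxidx b) end.

Lemma anc_idx c a : anc c a -> idx c <= maxidx a.
Proof. induction a; simpl; intros [H|H]; subst; simpl; try lia; try easy.
  specialize (IHa H); lia. Qed.

Lemma anc_lvl c a : valid a -> anc c a -> lvl c <= lvl a.
Proof. induction a; simpl; intros V [H|H]; subst; simpl; try lia; try easy.
  destruct V as [V1 [V2 _]]. specialize (IHa V1 H); lia. Qed.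

Lemma anc_lvl_eq c a : valid a -> anc c a -> lvl c = lvl a -> c = a.
Proof. destruct a; simpl; intros V [H|H] E; subst; auto; try easy.
  destruct V as [V1 [V2 _]]. pose proof (anc_lvl _ _ V1 H). lia. Qed.

Lemma anc_refl a : anc a a.
Proof. destruct a; simpl; auto. Qed.

Lemma anc_trans c b a : anc c b -> anc b a -> anc c a.
Proof. induction a; simpl; intros H1 [H2|H2]; subst; auto;
  destruct b; simpl in *; auto.
Qed.

Lemma anc_uniq u v a : valid a -> lvl u = lvl v -> anc u a -> anc v a -> u = v.
Proof. induction a; intros V E H1 H2.
  - simpl in *. destruct H1 as [H1|[]], H2 as [H2|[]]; congruence.
  - destruct H1 as [H1|H1].
    + subst. symmetry. apply anc_lvl_eq; auto.
    + destruct H2 as [H2|H2].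
      * subst. apply anc_lvl_eq; simpl; auto.
      * simpl in V. apply IHa; tauto.
Qed.

Lemma atom_eq (a b : Atom) : proj1_sig a = proj1_sig b -> a = b.
Proof. destruct a, b; simpl; intros ->; f_equal; apply proof_irrelevance. Qed.

Lemma parent_lvl b a : valid b -> parent b = Some a -> valid a /\ lvl a < lvl b.
Proof. destruct b; simpl; intros V H; try easy. injection H as ->. split; [tauto|lia]. Qed.

Section Swap.
Variables u v : raw.
Hypothesis Hlvl : lvl u = lvl v.
Hypothesis Hpr : pr1 u = pr1 v.
Hypothesis Hpar : parent u = parent v.
Hypothesis Huv : u <> v.
Hypothesis Hu : valid u.
Hypothesis Hv : valid v.

Fixpoint sw (a : raw) : raw :=
  if excluded_middle_informative (a = u) then v
  else if excluded_middle_informative (a = v) then u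
  else match a with A0 p k => A0 p k | AS n q b k => AS n q (sw b) k end.

Lemma sw_u : sw u = v.
Proof. destruct u eqn:E; simpl; destruct excluded_middle_informative; congruence. Qed.
Lemma sw_v : sw v = u.
Proof. destruct v eqn:E; simpl; (destruct excluded_middle_informative; [congruence|]);
  destruct excluded_middle_informative; congruence. Qed.
Lemma sw_o a : a <> u -> a <> v ->
  sw a = match a with A0 p k => A0 p k | AS n q b k => AS n q (sw b) k end.
Proof. intros H1 H2; destruct a; simpl; (destruct excluded_middle_informative; [congruence|]);
  destruct excluded_middle_informative; congruence. Qed.

Ltac cases a := let E := fresh "E" in let E' := fresh "E" in
  destruct (classic (a = u)) as [E|E]; [rewrite ?E|];
  [|destruct (classic (a = v)) as [E'|E']; [rewrite ?E'|]].

Lemma sw_lvl a : lvl (sw a) = lvl a.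
Proof. induction a as [p k|n q b IH k].
  - cases (A0 p k); [rewrite sw_u; auto|rewrite sw_v; auto|rewrite sw_o; auto].
  - cases (AS n q b k); [rewrite sw_u; auto|rewrite sw_v; auto|rewrite sw_o; auto].
Qed.

Lemma sw_pr1 a : pr1 (sw a) = pr1 a.
Proof. induction a as [p k|n q b IH k].
  - cases (A0 p k); [rewrite sw_u; auto|rewrite sw_v; auto|rewrite sw_o; auto].
  - cases (AS n q b k); [rewrite sw_u; auto|rewrite sw_v; auto|rewrite sw_o; auto].
Qed.

Lemma sw_low a : valid a -> lvl a < lvl u -> sw a = a.
Proof. induction a as [p k|n q b IH k]; intros V L;
  (assert (N1 : lvl u <> lvl u -> False) by tauto);
  (rewrite sw_o; [| intro HH; rewrite HH in L; lia | intro HH; rewrite HH, <- Hlvl in L; lia]); auto.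
    simpl in V. simpl in L. destruct V as [V1 [V2 _]]. rewrite IH; auto; lia.
Qed.

Lemma sw_valid a : valid a -> valid (sw a).
Proof. induction a as [p k|n q b IH k]; intros V.
  - cases (A0 p k); [rewrite sw_u; auto|rewrite sw_v; auto|rewrite sw_o; auto].
  - cases (AS n q b k); [rewrite sw_u; auto|rewrite sw_v; auto|rewrite sw_o; auto].
    simpl in *. rewrite sw_lvl, sw_pr1. intuition.
Qed.

Lemma sw_invol a : valid a -> sw (sw a) = a.
Proof. induction a as [p k|n q b IH k]; intros V.
  - cases (A0 p k); [rewrite sw_u, sw_v; auto|rewrite sw_v, sw_u; auto|rewrite (sw_o (A0 p k)); auto; rewrite sw_o; auto].
  - cases (AS n q b k); [rewrite sw_u, sw_v; auto|rewrite sw_v, sw_u; auto|].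
    simpl in V. rewrite (sw_o (AS n q b k)); auto.
    destruct (classic (AS n q (sw b) k = u)) as [F|F].
    + exfalso. assert (Hu' := Hu). rewrite <- F in Hu'. simpl in Hu'.
      assert (H1 : sw (sw b) = sw b) by (apply sw_low; [tauto|rewrite <- F; simpl; lia]).
      rewrite IH in H1 by tauto. rewrite <- H1 in F. auto.
    + destruct (classic (AS n q (sw b) k = v)) as [F'|F'].
      * exfalso. assert (Hv' := Hv). rewrite <- F' in Hv'. simpl in Hv'.
        assert (H1 : sw (sw b) = sw b) by (apply sw_low; [tauto|rewrite Hlvl, <- F'; simpl; lia]).
        rewrite IH in H1 by tauto. rewrite <- H1 in F'. auto.
      * rewrite sw_o; auto. rewrite IH; tauto.
Qed.

Lemma sw_fix a : ~ anc u a -> ~ anc v a -> sw a = a.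
Proof. induction a as [p k|n q b IH k]; intros H1 H2.
  - rewrite sw_o; auto; intro HH; [apply H1|apply H2]; rewrite <- HH; apply anc_refl.
  - rewrite sw_o; [| intro HH; apply H1; rewrite <- HH; apply anc_refl
                   | intro HH; apply H2; rewrite <- HH; apply anc_refl].
    simpl in H1, H2. rewrite IH; tauto.
Qed.

Lemma sw_anc a : anc u a -> anc v (sw a).
Proof. induction a as [p k|n q b IH k]; intros H.
  - destruct H as [H|[]]. rewrite H, sw_u. apply anc_refl.
  - cases (AS n q b k); [rewrite sw_u; apply anc_refl|..].
    + exfalso. apply Huv. rewrite <- E0. apply anc_lvl_eq; auto; rewrite E0; auto.
    + rewrite sw_o; auto. simpl. right. apply IH. destruct H; [congruence|auto].
Qed.

Lemma sw_parent a b : valid b -> parent b = Some a -> parent (sw b) = Some (sw a).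
Proof. intros V H. cases b; [rewrite E in H, V| rewrite E0 in H, V|].
  - rewrite sw_u, <- Hpar, H. f_equal. symmetry. destruct (parent_lvl _ _ V H).
    apply sw_low; auto.
  - rewrite sw_v, Hpar, H. f_equal. symmetry. destruct (parent_lvl _ _ V H).
    apply sw_low; auto; lia.
  - rewrite sw_o; auto. destruct b; simpl in *; congruence.
Qed.

Definition piS (a : Atom) : Atom := exist _ (sw (proj1_sig a)) (sw_valid _ (proj2_sig a)).

Lemma piS_G : inG piS.
Proof. split; [|split; [|split]].
  - exists piS; split; intros a; apply atom_eq; simpl; apply sw_invol, proj2_sig.
  - intros n a. unfold alvl; simpl. rewrite sw_lvl. tauto.
  - intros a. unfold apr1; simpl. apply sw_pr1.
  - intros b a H. simpl. apply sw_parent; auto. apply proj2_sig.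
Qed.
End Swap.

Lemma lvl_eq (pi : Atom -> Atom) a : inG pi -> alvl (pi a) = alvl a.
Proof. intros [_ [H _]]. pose proof (proj2 (H (alvl a) a) (le_n _)).
  pose proof (proj1 (H (alvl (pi a)) a) (le_n _)). lia. Qed.

Lemma inG_inv (pi : Atom -> Atom) : inG pi ->
  exists pinv, inG pinv /\ forall a, pi (pinv a) = a.
Proof. intros G. pose proof G as [[pinv [H1 H2]] [Hl [Hp Hpar]]].
  exists pinv; split; auto. split; [|split; [|split]].
  - exists pi; auto.
  - intros n a. rewrite <- (Hl n (pinv a)), H2. tauto.
  - intros a. rewrite <- (Hp (pinv a)), H2. auto.
  - intros b a H. remember (pinv b) as b' eqn:Eb.
    assert (Lb : alvl b' = alvl b) by (subst; rewrite <- (lvl_eq pi _ G), H2; auto).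
    destruct b' as [rb Vb]. destruct rb as [p k|n q c k].
    + exfalso. destruct b as [[] ?]; simpl in *; try easy.
    + simpl. f_equal. simpl in Vb.
      pose proof (Hpar (exist _ (AS n q c k) Vb) (exist _ c (proj1 Vb)) eq_refl) as HP.
      rewrite Eb, H2 in HP. rewrite H in HP. injection HP as HP.
      assert (a = pi (exist _ c (proj1 Vb))) by (apply atom_eq; auto).
      subst a. rewrite H1. reflexivity.
Qed.

Lemma closed_inV (R : Atom -> Atom -> Prop) :
  (forall pi, inG pi -> forall x y, R x y -> R (pi x) (pi y)) -> in_V R.
Proof. intros C. exists nil. intros pi G _ x y. split.
  - intros H. destruct (inG_inv pi G) as [pinv [G' E]].
    exists (pinv x), (pinv y). auto.
  - intros [x' [y' [H [<- <-]]]]. auto.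
Qed.

Lemma pi_AS (pi : Atom -> Atom) x y n q k : inG pi ->
  proj1_sig y = AS n q (proj1_sig x) k ->
  exists k', proj1_sig (pi y) = AS n q (proj1_sig (pi x)) k'.
Proof. intros G E. pose proof (lvl_eq pi y G) as L. pose proof G as [_ [_ [Hp Hpar]]].
  specialize (Hp y). specialize (Hpar y x). rewrite E in Hpar. specialize (Hpar eq_refl).
  unfold alvl, apr1 in *. rewrite E in L, Hp. destruct (proj1_sig (pi y)); simpl in *; try lia.
  injection L as ->. injection Hpar as ->. subst. eauto.
Qed.

Definition maxB (B : list Atom) := fold_right (fun b m => Nat.max (maxidx (proj1_sig b)) m) 0 B.
Lemma maxB_ge B b : In b B -> maxidx (proj1_sig b) <= maxB B.
Proof. induction B; simpl; [easy|]. intros [->|H]; [lia|]. specialize (IHB H); lia. Qed.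


Lemma fwd_le (le_refl : forall p, le p p) p q : le p q -> card_le_V le lestar p q.
Proof. intro Hle. destruct (classic (p = q)) as [<-|Hne].
  - exists (fun x y => apr1 x = p /\ x = y). split; [|split; [|split; [|split]]].
    + apply closed_inV. intros pi G x y [H1 <-]. split; auto.
      destruct G as [_ [_ [Hp _]]]; rewrite Hp; auto.
    + intros x y [H <-]; auto.
    + intros x H; exists x; auto.
    + intros x y y' [_ <-] [_ <-]; auto.
    + intros x x' y [_ <-] [_ <-]; auto.
  - exists (fun x y : Atom => apr1 x = p /\ proj1_sig y = AS (alvl x) q (proj1_sig x) 0).
    split; [|split; [|split; [|split]]].
    + apply closed_inV. intros pi G x y [H1 H2].
      destruct (pi_AS pi x y _ _ _ G H2) as [k' E].
      assert (Hx : apr1 (pi x) = p) by (destruct G as [_ [_ [Hp _]]]; rewrite Hp; auto).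
      split; auto. rewrite (lvl_eq pi x G).
      pose proof (proj2_sig (pi y)) as V. rewrite E in V. simpl in V.
      destruct V as [_ [_ [[_ ->]|[N _]]]]; auto.
      exfalso. apply N. unfold apr1 in Hx. rewrite Hx. auto.
    + intros x y [H1 H2]. split; auto. unfold apr1. rewrite H2. auto.
    + intros x Hx. unshelve eexists (exist _ (AS (alvl x) q (proj1_sig x) 0) _); simpl.
      * split; [apply proj2_sig|split; [auto|]]. left. split; auto.
        unfold apr1 in Hx. rewrite Hx. split; auto.
      * auto.
    + intros x y y' [_ H] [_ H']. apply atom_eq. congruence.
    + intros x x' y [_ H] [_ H']. apply atom_eq. rewrite H in H'. injection H'; auto.
Qed.

Lemma inV_flip (R : Atom -> Atom -> Prop) : in_V R -> in_V (fun a b => R b a).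
Proof. intros [B HB]. exists B. intros pi G F x y. rewrite (HB pi G F y x).
  split; intros [a [b H]]; exists b, a; tauto. Qed.

Lemma fwd_ls (le_refl : forall p, le p p) p q : lestar p q -> card_le_star_V le lestar p q.
Proof. intro Hls. destruct (classic (le p q)) as [Hle|Hnle].
  - destruct (fwd_le le_refl p q Hle) as [R [HV [Ht [Htot [Hf Hi]]]]].
    exists (fun y x => R x y). split; [apply inV_flip; auto|split; [|split]].
    + intros y x H. destruct (Ht _ _ H); auto.
    + intros y x x' H H'. eauto.
    + intros x Hx. destruct (Htot x Hx) as [y H]. eauto.
  - exists (fun (y x : Atom) => apr1 x = p /\ exists k, proj1_sig y = AS (alvl x) q (proj1_sig x) k).
    split; [|split; [|split]].
    + apply closed_inV. intros pi G y x [H1 [k H2]].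
      destruct (pi_AS pi x y _ _ _ G H2) as [k' E].
      split; [destruct G as [_ [_ [Hp _]]]; rewrite Hp; auto|].
      exists k'. rewrite (lvl_eq pi x G). auto.
    + intros y x [H1 [k H2]]. split; auto. unfold apr1. rewrite H2. auto.
    + intros y x x' [_ [k H]] [_ [k' H']]. apply atom_eq. rewrite H in H'. injection H'; auto.
    + intros x Hx. unshelve eexists (exist _ (AS (alvl x) q (proj1_sig x) 0) _); simpl.
      * split; [apply proj2_sig|split; [auto|]]. right.
        unfold apr1 in Hx. rewrite Hx. split; auto.
      * eauto.
Qed.

Lemma swap_ex u v : lvl u = lvl v -> pr1 u = pr1 v -> parent u = parent v -> u <> v ->
  valid u -> valid v ->
  exists pi : Atom -> Atom, inG pi /\
    (forall a, ~ anc u (proj1_sig a) -> ~ anc v (proj1_sig a) -> pi a = a) /\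
    (forall a, proj1_sig (pi a) = sw u v (proj1_sig a)).
Proof. intros H1 H2 H3 H4 H5 H6. exists (piS u v H1 H2 H3 H4 H5 H6).
  split; [apply piS_G|split; [|reflexivity]].
  intros a A1 A2. apply atom_eq. simpl. apply sw_fix; auto. Qed.

Lemma chain_ls (ls_refl : forall p, lestar p p)
  (ls_trans : forall p q r, lestar p q -> lestar q r -> lestar p r)
  (le_ls : forall p q, le p q -> lestar p q) c a :
  anc c a -> valid a -> lestar (pr1 c) (pr1 a).
Proof. induction a as [p k|n q b IH k]; intros [H|H] V; try (rewrite H; apply ls_refl); try easy.
  simpl in V. destruct V as [V1 [_ V3]]. apply (ls_trans _ _ _ (IH H V1)).
  simpl. destruct V3 as [[[L _] _]|[_ L]]; auto.
Qed.

Lemma chain_le (le_refl : forall p, le p p)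
  (le_trans : forall p q r, le p q -> le q r -> le p r) c a :
  anc c a -> valid a -> le (pr1 c) (pr1 a) \/
  exists n q0 d j, anc (AS n q0 d j) a /\ anc c d /\ valid (AS n q0 d j) /\ ~ le (pr1 d) q0.
Proof. induction a as [p k|n q b IH k]; intros [H|H] V; try (rewrite H; left; apply le_refl); try easy.
  pose proof V as V'. simpl in V. destruct V as [V1 [_ V3]]. destruct (IH H V1) as [L|[n0 [q0 [d [j [A1 [A2 [A3 A4]]]]]]]].
  - destruct V3 as [[[L' _] _]|[N _]].
    + left. simpl. eauto.
    + right. exists n, q, b, k. split; [apply anc_refl|]. auto.
  - right. exists n0, q0, d, j. simpl. auto.
Qed.

Lemma bwd_ls (ls_refl : forall p, lestar p p)
  (ls_trans : forall p q r, lestar p q -> lestar q r -> lestar p r)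
  (le_ls : forall p q, le p q -> lestar p q) p q :
  card_le_star_V le lestar p q -> lestar p q.
Proof.
  intros [R [[B HB] [Ht [Hf Hs]]]].
  set (x := exist (fun a => valid a) (A0 p (S (maxB B))) I : Atom).
  destruct (Hs x eq_refl) as [y Ry]. destruct (Ht _ _ Ry) as [Hy _].
  destruct (classic (anc (A0 p (S (maxB B))) (proj1_sig y))) as [Ha|Ha].
  - rewrite <- Hy. apply (chain_ls ls_refl ls_trans le_ls _ _ Ha (proj2_sig y)).
  - exfalso.
    assert (Huv : A0 p (S (maxB B)) <> A0 p (S (maxB B) + S (maxidx (proj1_sig y))))
      by (intro E; injection E; lia).
    destruct (swap_ex (A0 p (S (maxB B))) (A0 p (S (maxB B) + S (maxidx (proj1_sig y)))) eq_refl eq_refl eq_refl Huv I I) as [pi [G [Fix Ev]]].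
    assert (FB : forall b, In b B -> pi b = b).
    { intros b Hb. pose proof (maxB_ge B b Hb) as Hmb. apply Fix; intro H; apply anc_idx in H; simpl in H; lia. }
    pose proof (proj2 (HB pi G FB (pi y) (pi x)) (ex_intro _ y (ex_intro _ x (conj Ry (conj eq_refl eq_refl))))) as R2.
    rewrite (Fix y) in R2 by (auto; intro H; apply anc_idx in H; simpl in H; lia).
    pose proof (Hf _ _ _ Ry R2) as E. apply (f_equal (@proj1_sig _ _)) in E.
    rewrite Ev in E. unfold x in E; cbn [proj1_sig] in E. rewrite (sw_u (A0 p (S (maxB B))) (A0 p (S (maxB B) + S (maxidx (proj1_sig y)))) eq_refl eq_refl eq_refl Huv I) in E.
    injection E; lia.
Qed.

Lemma bwd_le (le_refl : forall p, le p p)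
  (le_trans : forall p q r, le p q -> le q r -> le p r) p q :
  card_le_V le lestar p q -> le p q.
Proof.
  intros [R [[B HB] [Ht [Htot [Hf Hi]]]]].
  set (x := exist (fun a => valid a) (A0 p (S (maxB B))) I : Atom).
  destruct (Htot x eq_refl) as [y Ry]. destruct (Ht _ _ Ry) as [_ Hy].
  destruct (classic (anc (A0 p (S (maxB B))) (proj1_sig y))) as [Ha|Ha].
  - destruct (chain_le le_refl le_trans _ _ Ha (proj2_sig y)) as [L|[n [q0 [d [j [A1 [A2 [Vu N]]]]]]]].
    + rewrite <- Hy. exact L.
    + exfalso.
      assert (Vv : valid (AS n q0 d (S j))).
      { simpl in Vu |- *. destruct Vu as [V1 [V2 [[[L _] _]|V3]]]; [exfalso; apply N; exact L|tauto]. }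
      assert (Huv : AS n q0 d j <> AS n q0 d (S j)) by (intro E; injection E; lia).
      destruct (swap_ex (AS n q0 d j) (AS n q0 d (S j)) eq_refl eq_refl eq_refl Huv Vu Vv) as [pi [G [Fix Ev]]].
      assert (Au : anc (A0 p (S (maxB B))) (AS n q0 d j)) by (apply (anc_trans _ d); auto; right; apply anc_refl).
      assert (Av : anc (A0 p (S (maxB B))) (AS n q0 d (S j))) by (apply (anc_trans _ d); auto; right; apply anc_refl).
      assert (FB : forall b, In b B -> pi b = b).
      { intros b Hb. pose proof (maxB_ge B b Hb) as Hmb.
        apply Fix; intro H; [pose proof (anc_trans _ _ _ Au H) as H'|pose proof (anc_trans _ _ _ Av H) as H'];
        apply anc_idx in H'; simpl in H'; lia. }
      assert (Fx : pi x = x) by (apply Fix; simpl; intros [H|[]]; discriminate).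
      pose proof (proj2 (HB pi G FB (pi x) (pi y)) (ex_intro _ x (ex_intro _ y (conj Ry (conj eq_refl eq_refl))))) as R2.
      rewrite Fx in R2. pose proof (Hf _ _ _ Ry R2) as E. apply (f_equal (@proj1_sig _ _)) in E.
      rewrite Ev in E.
      pose proof (sw_anc (AS n q0 d j) (AS n q0 d (S j)) eq_refl eq_refl eq_refl Huv Vu Vv _ A1) as A3. rewrite <- E in A3.
      apply Huv. apply (anc_uniq _ _ _ (proj2_sig y)); auto.
  - exfalso.
    assert (Huv : A0 p (S (maxB B)) <> A0 p (S (maxB B) + S (maxidx (proj1_sig y))))
      by (intro E; injection E; lia).
    destruct (swap_ex (A0 p (S (maxB B))) (A0 p (S (maxB B) + S (maxidx (proj1_sig y)))) eq_refl eq_refl eq_refl Huv I I) as [pi [G [Fix Ev]]].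
    assert (FB : forall b, In b B -> pi b = b).
    { intros b Hb. pose proof (maxB_ge B b Hb) as Hmb. apply Fix; intro H; apply anc_idx in H; simpl in H; lia. }
    pose proof (proj2 (HB pi G FB (pi x) (pi y)) (ex_intro _ x (ex_intro _ y (conj Ry (conj eq_refl eq_refl))))) as R2.
    rewrite (Fix y) in R2 by (auto; intro H; apply anc_idx in H; simpl in H; lia).
    pose proof (Hi _ _ _ Ry R2) as E. apply (f_equal (@proj1_sig _ _)) in E.
    rewrite Ev in E. unfold x in E; cbn [proj1_sig] in E. rewrite (sw_u (A0 p (S (maxB B))) (A0 p (S (maxB B) + S (maxidx (proj1_sig y)))) eq_refl eq_refl eq_refl Huv I) in E.
    injection E; lia.
Qed.

End Proof.

Theorem theorem2p7 (P : Type) (le lestar : P -> P -> Prop)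
  (le_refl : forall p, le p p)
  (le_antisym : forall p q, le p q -> le q p -> p = q)
  (le_trans : forall p q r, le p q -> le q r -> le p r)
  (ls_refl : forall p, lestar p p)
  (ls_trans : forall p q r, lestar p q -> lestar q r -> lestar p r)
  (le_ls : forall p q, le p q -> lestar p q) :
  forall p q : P,
    (le p q <-> card_le_V le lestar p q) /\
    (lestar p q <-> card_le_star_V le lestar p q).
Proof.
  intros p q. split; split.
  - apply fwd_le; auto.
  - apply bwd_le; auto.
  - apply fwd_ls; auto.
  - apply bwd_ls; auto.
Qed.
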